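(* Let $f:\mathbb{R}^n_{>0}\to\mathbb{R}^n_{>0}$ be order-preserving and homogeneous, and let $J$ be a nonempty proper subset of $[n]$. Then there exists $x\in\mathbb{R}^n_{>0}$ such that $$\max_{j\in J}\frac{f(x)_j}{x_j}<\min_{i\in[n]\setminus J}\frac{f(x)_i}{x_i}$$ if and only if $r(f^J_0)<\lambda(f^{[n]\setminus J}_\infty)$.
   Context: $[n]=\{1,\dots,n\}$; entrywise order. Order-preserving: $x\le y\Rightarrow f(x)\le f(y)$; homogeneous: $f(tx)=tf(x)$ for $t>0$. $f$ extends continuously to order-preserving homogeneous maps $\mathbb{R}^n_{\ge0}\to\mathbb{R}^n_{\ge0}$ and $(0,\infty]^n\to(0,\infty]^n$, again denoted $f$. $P^J_\alpha(x)_j=x_j$ for $j\in J$, $\alpha$ otherwise; $f^J_0=P^J_0fP^J_0$, $f^J_\infty=P^J_\infty fP^J_\infty$. For $g$ order-preserving homogeneous on $\mathbb{R}^n_{\ge0}$ or $(0,\infty]^n$: $r(g)=\inf_{x\in\mathbb{R}^n_{>0}}\max_ig(x)_i/x_i$, $\lambda(g)=\sup_{x\in\mathbb{R}^n_{>0}}\min_ig(x)_i/x_i$ (values in $[0,\infty]$). *)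

(* Defs.v *)
From HB Require Import structures.
From mathcomp Require Import all_boot all_order all_algebra.
From mathcomp Require Import all_classical all_reals ereal.
Set Implicit Arguments. Unset Strict Implicit. Unset Printing Implicit Defensive.
Import Order.TTheory GRing.Theory Num.Theory.
Local Open Scope ring_scope.
Local Open Scope classical_set_scope.

Section Defs.
Variables (R : realType) (n : nat).

Definition pos (x : 'I_n -> R) := forall i, 0 < x i.
Definition nonneg (x : 'I_n -> R) := forall i, 0 <= x i.
Definition vle (x y : 'I_n -> R) := forall i, x i <= y i.

(* f : R^n_{>0} -> R^n_{>0} order-preserving and homogeneous
   (f is a total function, only its values on R^n_{>0} matter) *)
Definition maps_pos (f : ('I_n -> R) -> ('I_n -> R)) :=
  forall x, pos x -> pos (f x).
Definition order_preserving (f : ('I_n -> R) -> ('I_n -> R)) :=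
  forall x y, pos x -> pos y -> vle x y -> vle (f x) (f y).
Definition homogeneous (f : ('I_n -> R) -> ('I_n -> R)) :=
  forall (t : R) x, 0 < t -> pos x -> f (fun i => t * x i) = (fun i => t * f x i).

(* continuous extension of f to R^n_{>=0}:
   f(x)_i = inf { f(y)_i : y in R^n_{>0}, x <= y }  (= lim_{t->0+} f(x + t 1)_i) *)
Definition ext0 (f : ('I_n -> R) -> ('I_n -> R)) (x : 'I_n -> R) (i : 'I_n)
  : \bar R :=
  ereal_inf [set ((f y) i)%:E | y in [set y | pos y /\ vle x y]].

(* continuous extension of f to (0,oo]^n:
   f(x)_i = sup { f(y)_i : y in R^n_{>0}, y <= x } *)
Definition extinf (f : ('I_n -> R) -> ('I_n -> R)) (x : 'I_n -> \bar R)
  (i : 'I_n) : \bar R :=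
  ereal_sup [set ((f y) i)%:E |
               y in [set y | pos y /\ forall j, ((y j)%:E <= x j)%E]].

Definition P0 (J : {set 'I_n}) (x : 'I_n -> R) : 'I_n -> R :=
  fun i => if i \in J then x i else 0.
Definition P0e (J : {set 'I_n}) (x : 'I_n -> \bar R) : 'I_n -> \bar R :=
  fun i => if i \in J then x i else 0%E.
Definition Pinfe (J : {set 'I_n}) (x : 'I_n -> \bar R) : 'I_n -> \bar R :=
  fun i => if i \in J then x i else +oo%E.

(* f^J_0 = P^J_0 f P^J_0 and f^J_oo = P^J_oo f P^J_oo, evaluated on R^n_{>0}
   (the only points where r and lambda need them) *)
Definition fJ0 f (J : {set 'I_n}) (x : 'I_n -> R) : 'I_n -> \bar R :=
  P0e J (ext0 f (P0 J x)).
Definition fJinf f (J : {set 'I_n}) (x : 'I_n -> R) : 'I_n -> \bar R :=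
  Pinfe J (extinf f (Pinfe J (fun i => (x i)%:E))).

Definition eratio (g : ('I_n -> R) -> ('I_n -> \bar R)) x i : \bar R :=
  (g x i * ((x i)^-1)%:E)%E.

Definition rr (g : ('I_n -> R) -> ('I_n -> \bar R)) : \bar R :=
  ereal_inf [set (\big[maxe/-oo%E]_(i : 'I_n) eratio g x i) | x in pos].
Definition lam (g : ('I_n -> R) -> ('I_n -> \bar R)) : \bar R :=
  ereal_sup [set (\big[mine/+oo%E]_(i : 'I_n) eratio g x i) | x in pos].

End Defs.

(* Main.v *)
Require Import Defs.
From HB Require Import structures.
From mathcomp Require Import all_boot all_order all_algebra.
From mathcomp Require Import all_classical all_reals ereal.
From mathcomp Require Import lra.
Import Order.TTheory GRing.Theory Num.Theory.
Local Open Scope ring_scope.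

Section Helpers.
Variable R : realType.
Local Open Scope ereal_scope.

Lemma bmax_lt (I : finType) (P : pred I) (F : I -> \bar R) (c : R) :
  (forall i, P i -> F i < c%:E) -> \big[maxe/-oo]_(i | P i) F i < c%:E.
Proof.
move=> h; elim/big_ind: _ => //; first exact: ltNyr.
by move=> a b ha hb; rewrite gt_max ha hb.
Qed.

Lemma bmax_le (I : finType) (P : pred I) (F : I -> \bar R) (M : \bar R) :
  (forall i, P i -> F i <= M) -> \big[maxe/-oo]_(i | P i) F i <= M.
Proof.
move=> h; elim/big_ind: _ => //; first exact: leNye.
by move=> a b ha hb; rewrite ge_max ha hb.
Qed.

Lemma le_bmax (I : finType) (P : pred I) (F : I -> \bar R) j :
  P j -> F j <= \big[maxe/-oo]_(i | P i) F i.
Proof. by move=> Pj; rewrite (bigD1 j) //= le_max lexx. Qed.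

Lemma bmin_gt (I : finType) (P : pred I) (F : I -> \bar R) (c : R) :
  (forall i, P i -> c%:E < F i) -> c%:E < \big[mine/+oo]_(i | P i) F i.
Proof.
move=> h; elim/big_ind: _ => //; first exact: ltry.
by move=> a b ha hb; rewrite lt_min ha hb.
Qed.

Lemma bmin_ge (I : finType) (P : pred I) (F : I -> \bar R) (M : \bar R) :
  (forall i, P i -> M <= F i) -> M <= \big[mine/+oo]_(i | P i) F i.
Proof.
move=> h; elim/big_ind: _ => //; first exact: leey.
by move=> a b ha hb; rewrite le_min ha hb.
Qed.

Lemma ge_bmin (I : finType) (P : pred I) (F : I -> \bar R) j :
  P j -> \big[mine/+oo]_(i | P i) F i <= F j.
Proof. by move=> Pj; rewrite (bigD1 j) //= ge_min lexx. Qed.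

Lemma ereal_mid (a b : \bar R) : a < b -> exists c : R, a < c%:E /\ c%:E < b.
Proof.
case: a => [a| |]; case: b => [b| |] //= h.
- exists ((a + b) / 2)%R; rewrite !lte_fin; rewrite lte_fin in h; split; lra.
- by exists (a + 1)%R; rewrite ltry lte_fin; split => //; lra.
- by exists (b - 1)%R; rewrite ltNyr lte_fin; split => //; lra.
- by exists 0%R; rewrite ltNyr ltry.
Qed.

End Helpers.

Theorem lemma3p3 (R : realType) (n : nat) (f : ('I_n -> R) -> ('I_n -> R))
  (J : {set 'I_n})
  (hpos : maps_pos f) (hmon : order_preserving f) (hhom : homogeneous f)
  (hJ0 : J != finset.set0) (hJT : J != [set: 'I_n]) :
  (exists x : 'I_n -> R, pos x /\
     (\big[maxe/-oo%E]_(j in J) ((f x j / x j)%:E) <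
      \big[mine/+oo%E]_(i in ~: J) ((f x i / x i)%:E))%E)
  <-> (rr (fun x => fJ0 f J x) < lam (fun x => fJinf f (~: J) x))%E.
Proof.
have [j0 j0J] : exists j0, j0 \in J by apply/set0Pn.
split.
- move=> [x [xpos H]].
  apply: (le_lt_trans _ (lt_le_trans H _)).
  + apply: (@le_trans _ _ (\big[maxe/-oo%E]_(i : 'I_n) eratio (fun x => fJ0 f J x) x i)).
      by apply: ereal_inf_lbound; exists x.
    apply: bmax_le => i _; rewrite /eratio /fJ0 /P0e.
    case: ifP => iJ.
    * apply: (le_trans _ (@le_bmax _ _ (fun j => j \in J) (fun j => (f x j / x j)%:E) _ iJ)).
      rewrite EFinM; apply: lee_wpmul2r; first by rewrite lee_fin invr_ge0; apply: ltW.
      apply: ereal_inf_lbound; exists x => //; split => // k.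
      by rewrite /P0; case: ifP => // _; exact/ltW.
    * rewrite mul0e; apply: (le_trans _ (@le_bmax _ _ (fun j => j \in J) (fun j => (f x j / x j)%:E) _ j0J)).
      change ((0:R)%:E <= (f x j0 / x j0)%:E)%E; rewrite lee_fin; apply: divr_ge0; apply: ltW; [exact: hpos | exact: xpos].
  + apply: (@le_trans _ _ (\big[mine/+oo%E]_(i : 'I_n) eratio (fun x => fJinf f (~: J) x) x i)); last first.
      by apply: ereal_sup_ubound; exists x.
    apply: bmin_ge => i _; rewrite /eratio /fJinf /Pinfe.
    case: ifP => iK.
    * apply: (le_trans (@ge_bmin _ _ (fun j => j \in ~: J) (fun j => (f x j / x j)%:E) _ iK)).
      rewrite EFinM; apply: lee_wpmul2r; first by rewrite lee_fin invr_ge0; apply: ltW.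
      apply: ereal_sup_ubound; exists x => //; split => // k.
      by case: ifP => // _; exact: leey.
    * by rewrite gt0_mulye ?leey // lte_fin invr_gt0.
- move=> H.
  have [a [u upos <-] ha] := ereal_inf_lt H.
  have [b [v vpos <-] hab] := ereal_sup_gt ha.
  have [c [hAc hcB]] := @ereal_mid R _ _ hab.
  have hj : forall j, j \in J -> (ext0 f (P0 J u) j < (c * u j)%:E)%E.
    move=> j jJ.
    have := le_lt_trans (@le_bmax R _ predT (fun i => eratio (fun x => fJ0 f J x) u i) j isT) hAc.
    by rewrite /eratio /fJ0 /P0e jJ lte_pdivrMr // -EFinM.
  have hi : forall i, i \in ~: J ->
      ((c * v i)%:E < extinf f (Pinfe (~: J) (fun k => (v k)%:E)) i)%E.
    move=> i iK.
    have := lt_le_trans hcB (@ge_bmin R _ predT (fun i => eratio (fun x => fJinf f (~: J) x) v i) i isT).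
    by rewrite /eratio /fJinf /Pinfe iK lte_pdivlMr // -EFinM.
  have /choice[y hy] : forall j, exists yj : 'I_n -> R, pos yj /\
      (j \in J -> vle (P0 J u) yj /\ f yj j < c * u j).
    move=> j.
    case: (boolP (j \in J)) => jJ.
    + have [_ [yj [yp yle] <-] lt] := ereal_inf_lt (hj j jJ).
      by exists yj; split => // _; split => //; rewrite -lte_fin.
    + by exists u; split => //; rewrite (negbTE jJ).
  have /choice[z hz] : forall i, exists zi : 'I_n -> R, pos zi /\
      (i \in ~: J -> (forall k, ((zi k)%:E <= Pinfe (~: J) (fun k => (v k)%:E) k)%E)
                     /\ c * v i < f zi i).
    move=> i.
    case: (boolP (i \in ~: J)) => iK.
    + have [_ [zi [zp zle] <-] lt] := ereal_sup_gt (hi i iK).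
      by exists zi; split => // _; split => //; rewrite -lte_fin.
    + by exists v; split => //; rewrite (negbTE iK).
  pose eps := \big[Num.min/1]_(p : 'I_n * 'I_n)
                 Num.min (y p.1 p.2 / v p.2) (u p.2 / z p.1 p.2).
  have epos : 0 < eps.
    rewrite /eps; elim/big_ind: _ => //.
      by move=> a1 b1 h1 h2; rewrite lt_min h1 h2.
    move=> p _; rewrite lt_min; apply/andP; split; apply: divr_gt0;
      by [case: (hy p.1) | case: (hz p.1)].
  have epsle : forall p : 'I_n * 'I_n,
      eps <= y p.1 p.2 / v p.2 /\ eps <= u p.2 / z p.1 p.2.
    move=> p; have : eps <= Num.min (y p.1 p.2 / v p.2) (u p.2 / z p.1 p.2).
      by rewrite /eps (bigD1 p) //= ge_min lexx.
    by rewrite le_min => /andP.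
  have eps0 : eps != 0 by rewrite gt_eqF.
  pose x := fun k => if k \in J then u k else eps * v k.
  pose w := fun k => if k \in J then u k / eps else v k.
  have xpos : pos x by move=> k; rewrite /x; case: ifP => _; rewrite ?mulr_gt0.
  have wpos : pos w by move=> k; rewrite /w; case: ifP => _; rewrite ?divr_gt0.
  have hxw : x = (fun k => eps * w k).
    by apply: funext => k; rewrite /x /w; case: ifP => // _; rewrite mulrC divfK.
  exists x; split => //.
  apply: (@lt_trans _ _ c%:E).
  + apply: bmax_lt => j jJ; rewrite lte_fin.
    have [yp [yle ylt]] := (conj (hy j).1 ((hy j).2 jJ)).
    have hle : vle x (y j).
      move=> k; rewrite /x; case: ifPn => kJ.
        by have := yle k; rewrite /P0 kJ.
      have [h1 _] := epsle (j, k); rewrite /= (ler_pdivlMr _ _ (vpos k)) in h1.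
      exact: h1.
    have xj : x j = u j by rewrite /x jJ.
    have h := hmon x (y j) xpos yp hle j.
    rewrite xj ltr_pdivrMr //; exact: le_lt_trans h ylt.
  + apply: bmin_gt => i iK; rewrite lte_fin.
    have [zp [zle zlt]] := (conj (hz i).1 ((hz i).2 iK)).
    have hle : vle (z i) w.
      move=> k; rewrite /w; case: ifPn => kJ.
        have [_ h1] := epsle (i, k); rewrite /= ler_pdivlMr // in h1.
        by rewrite ler_pdivlMr // mulrC.
      by have := zle k; rewrite /Pinfe inE kJ lee_fin.
    have hfw := hmon (z i) w zp wpos hle i.
    have iJ : i \notin J by rewrite inE in iK.
    have -> : f x i = eps * f w i by rewrite hxw hhom.
    have xi : x i = eps * v i by rewrite /x (negbTE iJ).
    rewrite xi ltr_pdivlMr ?mulr_gt0 //.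
    rewrite mulrCA ltr_pM2l //; exact: lt_le_trans zlt hfw.
Qed.
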